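(* Let $\omega=\{\omega_k\}_{k\in\mathbb{N}}$ be a sequence of positive real numbers with $\omega_0=1$, such that there is a constant $C>1$ with $\omega_k\le Ck^2$ and $\omega_k\le\omega_{k+1}$ for all $k\in\mathbb{N}$. Let $H^2_\omega$ be the space of holomorphic functions $f(z)=\sum_{k\ge0}\hat f(k)z^k$ on the unit disc $\mathbb{D}$ with finite norm $\|f\|_\omega=\left(\sum_{k\ge0}|\hat f(k)|^2\omega_k\right)^{1/2}$. Let $f\in H^2_\omega$. Consider the conditions: (a) $\|f\|_\omega=1$ and for every integer $k\ge1$ and every $\lambda\in\mathbb{C}$, $$\|f\,g_{k,\lambda}\|_\omega^2\le \omega_k+|\lambda|^2,\qquad\text{where } g_{k,\lambda}(z)=z^k+\lambda;$$ (b) $\|f\|_\omega=\|f\|_{M}=1$, where $\|f\|_M$ denotes the multiplier norm of $f$ on $H^2_\omega$. Then (b) implies (a), and (a) implies that $f$ is $H^2_\omega$-inner, i.e. $\langle z^j f,f\rangle_\omega=\delta_{0,j}$ for all $j\in\mathbb{N}$.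
   Context: $\mathbb{N}=\{0,1,2,\dots\}$. The inner product on $H^2_\omega$ is $\langle f,g\rangle_\omega=\sum_{k\ge0}\hat f(k)\overline{\hat g(k)}\,\omega_k$, and $\delta_{0,j}$ is the Kronecker delta. A holomorphic function $h$ on $\mathbb{D}$ is a multiplier of $H^2_\omega$ if $g\mapsto hg$ is a bounded operator on $H^2_\omega$; its multiplier norm $\|h\|_M$ is the operator norm of this multiplication operator (condition (b) in particular requires $f$ to be a multiplier). Such spaces $H^2_\omega$ coincide with Dirichlet-type spaces $D_\mu$ with radial measure $\mu$, whose norm is $\|f\|_{H^2}^2+\int_{\mathbb{D}}|f'|^2\,d\mu$. *)

(* Defs.v *)
(* Elements of H^2_omega are represented by their
   Taylor coefficient sequences  a : nat -> C  (f(z) = sum_k a k z^k). *)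
From Stdlib Require Import Reals.
From Coquelicot Require Import Coquelicot.
Open Scope R_scope.

Definition inH (w : nat -> R) (a : nat -> C) : Prop :=
  ex_series (fun k => (Cmod (a k)) ^ 2 * w k).

(* ||f||_w^2 and ||f||_w (meaningful when inH w a) *)
Definition wnorm2 (w : nat -> R) (a : nat -> C) : R :=
  Series (fun k => (Cmod (a k)) ^ 2 * w k).
Definition wnorm (w : nat -> R) (a : nat -> C) : R := sqrt (wnorm2 w a).

Definition cprod (a b : nat -> C) : nat -> C :=
  fun n => @sum_n C_AbelianMonoid (fun i => Cmult (a i) (b (n - i)%nat)) n.

(* Taylor coefficients of g_{k,lambda}(z) = z^k + lambda, for k >= 1 *)
Definition gkl (k : nat) (lam : C) : nat -> C :=
  fun n => if Nat.eqb n k then 1%C else if Nat.eqb n 0 then lam else 0%C.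

Definition mult_bound (w : nat -> R) (h : nat -> C) (M : R) : Prop :=
  forall g, inH w g -> inH w (cprod h g) /\ wnorm w (cprod h g) <= M * wnorm w g.

Definition is_mult_norm (w : nat -> R) (h : nat -> C) (M : R) : Prop :=
  mult_bound w h M /\ (forall M', mult_bound w h M' -> M <= M').

Definition shiftc (j : nat) (a : nat -> C) : nat -> C :=
  fun n => if Nat.leb j n then a (n - j)%nat else 0%C.

Definition winner_is (w : nat -> R) (a b : nat -> C) (v : C) : Prop :=
  @is_series C_AbsRing C_NormedModule
    (fun k => Cmult (Cmult (a k) (Cconj (b k))) (RtoC (w k))) v.

Definition admissible_weight (w : nat -> R) : Prop :=
  (forall k, 0 < w k) /\ w 0%nat = 1 /\
  exists Cst, 1 < Cst /\
    (forall k, (1 <= k)%nat -> w k <= Cst * (INR k) ^ 2) /\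
    (forall k, w k <= w (S k)).

(* Main.v *)
Require Import Defs.
From Stdlib Require Import Reals Lra Lia Psatz.
From Coquelicot Require Import Coquelicot.
Open Scope R_scope.

Ltac ceq := apply injective_projections; simpl; ring.

Lemma sum_gkl (k : nat) (lam : C) (a : nat -> C) (n : nat) :
  (1 <= k)%nat -> forall N, (N <= n)%nat ->
  @sum_n C_AbelianMonoid (fun i => Cmult (a i) (gkl k lam (n - i)%nat)) N =
  Cplus (if (Nat.leb k n && Nat.leb (n - k) N)%bool then a (n - k)%nat else 0%C)
        (if Nat.eqb N n then Cmult lam (a n) else 0%C).
Proof.
  intros Hk N. induction N as [|N IH]; intros HN.
  - rewrite sum_O. unfold gkl. rewrite Nat.sub_0_r.
    destruct (Nat.eqb_spec n k) as [E|E].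
    + subst n. rewrite Nat.leb_refl. replace (k - k)%nat with 0%nat by lia.
      destruct (Nat.eqb_spec 0 k); [lia|]. simpl. ceq.
    + destruct (Nat.eqb_spec n 0) as [E0|E0].
      * subst n. destruct (Nat.leb_spec k 0); [lia|]. simpl. ceq.
      * destruct (Nat.leb_spec k n); destruct (Nat.leb_spec (n-k) 0);
        destruct (Nat.eqb_spec 0 n); try lia; simpl; ceq.
  - rewrite sum_Sn, IH by lia.
    destruct (Nat.eqb_spec N n) as [E|E]; [lia|].
    unfold gkl.
    destruct (Nat.eqb_spec (n - S N) k) as [E1|E1].
    + destruct (Nat.leb_spec k n); [|lia]. destruct (Nat.leb_spec (n-k) N); [lia|].
      destruct (Nat.leb_spec (n-k) (S N)); [|lia].
      destruct (Nat.eqb_spec (S N) n); [lia|].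
      replace (n-k)%nat with (S N) by lia. simpl; ceq.
    + destruct (Nat.eqb_spec (n - S N) 0) as [E2|E2].
      * assert (S N = n) by lia. subst n.
        rewrite Nat.eqb_refl.
        destruct (Nat.leb_spec k (S N)); destruct (Nat.leb_spec (S N - k) N);
        destruct (Nat.leb_spec (S N - k) (S N)); try lia; simpl;
        idtac; ceq.
      * destruct (Nat.eqb_spec (S N) n); [lia|].
        destruct (Nat.leb_spec k n); destruct (Nat.leb_spec (n - k) N);
        destruct (Nat.leb_spec (n - k) (S N)); try lia; simpl;
        idtac; ceq.
Qed.

Lemma cprod_gkl (k : nat) (lam : C) (a : nat -> C) (n : nat) :
  (1 <= k)%nat -> cprod a (gkl k lam) n = Cplus (shiftc k a n) (Cmult lam (a n)).
Proof.
  intros Hk. unfold cprod. rewrite (sum_gkl k lam a n Hk n) by lia.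
  rewrite Nat.eqb_refl. unfold shiftc.
  destruct (Nat.leb_spec k n); destruct (Nat.leb_spec (n-k) n); try lia; simpl; ceq.
Qed.

Lemma sum_n_C (a : nat -> C) N :
  @sum_n C_AbelianMonoid a N = (sum_n (fun n => fst (a n)) N, sum_n (fun n => snd (a n)) N).
Proof.
  induction N as [|N IH].
  - rewrite !sum_O. destruct (a 0%nat); reflexivity.
  - rewrite !sum_Sn, IH. reflexivity.
Qed.

Lemma is_series_C (a : nat -> C) (p q : R) :
  is_series (fun n => fst (a n)) p -> is_series (fun n => snd (a n)) q ->
  @is_series C_AbsRing C_NormedModule a (p, q).
Proof.
  unfold is_series. intros H1 H2.
  apply filterlim_locally. intros eps.
  pose proof (proj1 (filterlim_locally _ _) H1 eps) as B1.
  pose proof (proj1 (filterlim_locally _ _) H2 eps) as B2.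
  generalize (filter_and _ _ B1 B2). apply filter_imp.
  intros N [C1 C2]. rewrite sum_n_C. split; assumption.
Qed.

Lemma sum_gkl_norm (w : nat -> R) (k : nat) (lam : C) :
  (1 <= k)%nat -> w 0%nat = 1 -> forall N,
  sum_n (fun n => Cmod (gkl k lam n) ^ 2 * w n) N =
  Cmod lam ^ 2 + (if Nat.leb k N then w k else 0).
Proof.
  intros Hk Hw0 N. induction N as [|N IH].
  - rewrite sum_O. unfold gkl. destruct (Nat.eqb_spec 0 k); [lia|].
    destruct (Nat.leb_spec k 0); [lia|]. simpl. rewrite Hw0. ring.
  - rewrite sum_Sn, IH. unfold gkl. simpl (S N =? 0)%nat.
    destruct (Nat.eqb_spec (S N) k) as [E|E].
    + subst k. destruct (Nat.leb_spec (S N) N); [lia|].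
      rewrite Nat.leb_refl, Cmod_1. unfold plus; simpl. ring.
    + rewrite Cmod_0. destruct (Nat.leb_spec k N); destruct (Nat.leb_spec k (S N)); try lia;
      unfold plus; simpl; ring.
Qed.

Lemma is_series_gkl (w : nat -> R) (k : nat) (lam : C) :
  (1 <= k)%nat -> w 0%nat = 1 ->
  is_series (fun n => Cmod (gkl k lam n) ^ 2 * w n) (w k + Cmod lam ^ 2).
Proof.
  intros Hk Hw0. unfold is_series.
  apply filterlim_ext_loc with (f := fun _ => w k + Cmod lam ^ 2).
  - exists k. intros n Hn. rewrite sum_gkl_norm by assumption.
    destruct (Nat.leb_spec k n); [|lia]. ring.
  - apply filterlim_const.
Qed.

Lemma Series_nonneg (a : nat -> R) : (forall n, 0 <= a n) -> ex_series a -> 0 <= Series a.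
Proof.
  intros Ha He.
  assert (E : Series (fun n => 0 * a n) = 0) by (rewrite Series_scal_l; ring).
  rewrite <- E. apply Series_le; auto. intros n; specialize (Ha n); split; lra.
Qed.

Lemma wnorm2_one (w : nat -> R) (f : nat -> C) : wnorm w f = 1 -> wnorm2 w f = 1.
Proof.
  unfold wnorm. intros H. destruct (Rle_or_lt (wnorm2 w f) 0) as [h|h].
  - rewrite sqrt_neg_0 in H by exact h. lra.
  - rewrite <- (sqrt_sqrt (wnorm2 w f)) by lra. rewrite H. ring.
Qed.

Lemma Pbound (a b c d w : R) : 0 <= w ->
  Rabs ((a * c + b * d) * w) <= (a^2 + b^2) * w + (c^2 + d^2) * w.
Proof.
  intros Hw.
  pose proof (pow2_ge_0 (a-c)). pose proof (pow2_ge_0 (b-d)).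
  pose proof (pow2_ge_0 (a+c)). pose proof (pow2_ge_0 (b+d)).
  assert (0 <= a^2+b^2+c^2+d^2 - (a*c+b*d)) by (simpl in *; nra).
  assert (0 <= a^2+b^2+c^2+d^2 + (a*c+b*d)) by (simpl in *; nra).
  apply Rabs_le. split; nra.
Qed.

Lemma norm_decomp (u v lam : C) (wn : R) :
  Cmod (Cplus u (Cmult lam v)) ^ 2 * wn =
  Cmod u ^ 2 * wn + Cmod lam ^ 2 * (Cmod v ^ 2 * wn) +
  2 * (fst lam * ((fst u * fst v + snd u * snd v) * wn) +
       snd lam * ((snd u * fst v - fst u * snd v) * wn)).
Proof.
  rewrite !Cmod2_alt. destruct u as [u1 u2], v as [v1 v2], lam as [x y].
  unfold Re, Im; simpl. ring.
Qed.

Lemma exR_plus (a b : nat -> R) : ex_series a -> ex_series b -> ex_series (fun n => a n + b n).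
Proof. intros. exact (@ex_series_plus R_AbsRing R_NormedModule a b H H0). Qed.
Lemma exR_scal (c : R) (a : nat -> R) : ex_series a -> ex_series (fun n => c * a n).
Proof. intros. exact (@ex_series_scal_l R_AbsRing R_NormedModule c a H). Qed.

Theorem theorem2p1 (w : nat -> R) (f : nat -> C) :
  admissible_weight w ->
  inH w f ->
  let cond_a :=
    wnorm w f = 1 /\
    (forall (k : nat) (lam : C), (1 <= k)%nat ->
       inH w (cprod f (gkl k lam)) /\
       wnorm2 w (cprod f (gkl k lam)) <= w k + (Cmod lam) ^ 2) in
  let cond_b := wnorm w f = 1 /\ is_mult_norm w f 1 in
  (cond_b -> cond_a) /\
  (cond_a -> forall j : nat,
     winner_is w (shiftc j f) f (if Nat.eqb j 0 then 1%C else 0%C)).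
Proof.
  intros [Hwpos [Hw0 _]] Hf cond_a cond_b. unfold cond_a, cond_b. split.
  - intros [Hn [Hmb _]]. split; [exact Hn|]. intros k lam Hk.
    assert (Hg : is_series (fun n => Cmod (gkl k lam n) ^ 2 * w n) (w k + Cmod lam ^ 2))
      by (apply is_series_gkl; assumption).
    destruct (Hmb (gkl k lam) (ex_intro _ _ Hg)) as [Hi Hle]. split; [exact Hi|].
    unfold wnorm, wnorm2 in Hle. rewrite (is_series_unique _ _ Hg) in Hle.
    assert (0 <= w k) by (apply Rlt_le, Hwpos).
    apply sqrt_le_0.
    + apply Series_nonneg; [|exact Hi]. intros n. apply Rmult_le_pos; [apply pow2_ge_0|apply Rlt_le, Hwpos].
    + nra.
    + unfold wnorm2; lra.
  - intros [Hn Ha] j.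
    pose proof (wnorm2_one w f Hn) as H1.
    assert (Hs0 : is_series (fun n => Cmod (f n) ^ 2 * w n) 1).
    { rewrite <- H1. apply Series_correct. exact Hf. }
    destruct j as [|k].
    + simpl. unfold winner_is. apply is_series_C.
      * apply is_series_ext with (a := fun n => Cmod (f n) ^ 2 * w n); [|exact Hs0].
        intros n. unfold shiftc. rewrite Cmod2_alt. simpl. rewrite Nat.sub_0_r.
        destruct (f n) as [a b]. unfold Re, Im; simpl. ring.
      * apply is_series_ext with (a := fun n => 0 * (Cmod (f n) ^ 2 * w n)).
        -- intros n. unfold shiftc. simpl. rewrite Nat.sub_0_r.
           destruct (f n) as [a b]. simpl. ring.
        -- pose proof (is_series_scal_l (0:R) _ _ Hs0) as Z.
           rewrite (@scal_zero_l R_AbsRing R_NormedModule) in Z. exact Z.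
    + simpl. assert (Hk : (1 <= S k)%nat) by lia. set (K := S k) in *.
      set (u := shiftc K f).
      set (S1 := fun n => Cmod (u n) ^ 2 * w n).
      set (S0 := fun n => Cmod (f n) ^ 2 * w n).
      set (P := fun n => (fst (u n) * fst (f n) + snd (u n) * snd (f n)) * w n).
      set (Q := fun n => (snd (u n) * fst (f n) - fst (u n) * snd (f n)) * w n).
      assert (HS1 : ex_series S1).
      { destruct (Ha K 0%C Hk) as [Hi _]. apply ex_series_ext with (2 := Hi).
        intros n. unfold S1, u. rewrite cprod_gkl by exact Hk.
        f_equal. f_equal. f_equal. destruct (shiftc K f n), (f n). apply injective_projections; simpl; ring. }
      assert (HP : ex_series P).
      { apply (@ex_series_le R_AbsRing R_CompleteNormedModule _ (fun n => S1 n + S0 n)).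
        - intros n. change (norm (P n)) with (Rabs (P n)). unfold P, S1, S0.
          rewrite !Cmod2_alt. unfold Re, Im.
          apply Pbound. apply Rlt_le, Hwpos.
        - apply (exR_plus S1 S0 HS1 Hf). }
      assert (HQ : ex_series Q).
      { apply (@ex_series_le R_AbsRing R_CompleteNormedModule _ (fun n => S1 n + S0 n)).
        - intros n. change (norm (Q n)) with (Rabs (Q n)). unfold Q, S1, S0.
          rewrite !Cmod2_alt. unfold Re, Im.
          replace ((snd (u n) * fst (f n) - fst (u n) * snd (f n)) * w n) with
            ((snd (u n) * fst (f n) + fst (u n) * (- snd (f n))) * w n) by ring.
          replace (snd (f n) ^ 2) with ((- snd (f n)) ^ 2) by ring.
          replace (fst (u n) ^ 2 + snd (u n) ^ 2) with (snd (u n) ^ 2 + fst (u n) ^ 2) by ring.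
          apply Pbound. apply Rlt_le, Hwpos.
        - apply (exR_plus S1 S0 HS1 Hf). }
      assert (Key : forall x y, Series S1 + 2 * (x * Series P + y * Series Q) <= w K).
      { intros x y. destruct (Ha K (x, y) Hk) as [_ Hle].
        unfold wnorm2 in Hle.
        rewrite (Series_ext _ (fun n => (S1 n + (x^2+y^2) * S0 n) + 2 * (x * P n + y * Q n))) in Hle.
        2:{ intros n. rewrite cprod_gkl by exact Hk. rewrite norm_decomp.
            rewrite (Cmod2_alt (x, y)). unfold S1, S0, P, Q, u, Re, Im. simpl. ring. }
        rewrite Series_plus in Hle.
        2:{ apply exR_plus; [exact HS1|]. apply exR_scal. exact Hf. }
        2:{ apply exR_scal. apply exR_plus; apply exR_scal; assumption. }
        rewrite Series_plus in Hle by (try apply exR_scal; assumption).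
        rewrite !Series_scal_l in Hle.
        rewrite Series_plus in Hle by (apply exR_scal; assumption).
        rewrite !Series_scal_l in Hle.
        replace (Series S0) with 1 in Hle by (symmetry; apply is_series_unique; exact Hs0).
        rewrite Cmod2_alt in Hle. unfold Re, Im in Hle. simpl in Hle. lra. }
      assert (Z : Series P ^ 2 + Series Q ^ 2 = 0).
      { destruct (Req_dec (Series P ^ 2 + Series Q ^ 2) 0) as [E|E]; [exact E|].
        exfalso. set (D := Series P ^ 2 + Series Q ^ 2) in *.
        assert (0 <= D) by (unfold D; pose proof (pow2_ge_0 (Series P)); pose proof (pow2_ge_0 (Series Q)); lra).
        assert (0 < D) by (destruct (Rle_lt_or_eq_dec 0 D); auto; congruence).
        set (t := (Rabs (w K - Series S1) + 1) / (2 * D)).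
        specialize (Key (t * Series P) (t * Series Q)).
        assert (Et : 2 * (t * D) = Rabs (w K - Series S1) + 1) by (unfold t; field; lra).
        assert (Et2 : t * Series P * Series P + t * Series Q * Series Q = t * D) by (unfold D; ring).
        pose proof (Rle_abs (w K - Series S1)). lra. }
      assert (EP : Series P = 0).
      { pose proof (pow2_ge_0 (Series P)); pose proof (pow2_ge_0 (Series Q)).
        apply (Rsqr_0_uniq). unfold Rsqr. simpl in *. lra. }
      assert (EQ : Series Q = 0).
      { pose proof (pow2_ge_0 (Series P)); pose proof (pow2_ge_0 (Series Q)).
        apply (Rsqr_0_uniq). unfold Rsqr. simpl in *. lra. }
      unfold winner_is. apply is_series_C.
      * apply is_series_ext with (a := P).
        -- intros n. unfold P, u. destruct (shiftc K f n), (f n). simpl. ring.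
        -- rewrite <- EP. apply Series_correct; exact HP.
      * apply is_series_ext with (a := Q).
        -- intros n. unfold Q, u. destruct (shiftc K f n), (f n). simpl. ring.
        -- rewrite <- EQ. apply Series_correct; exact HQ.
Qed.
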